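(* Fix a protocol in the totally quasi-ordered population protocol model $\mathrm{POP}^{\precsim}$, with finite state set $Q$, totally ordered color set $\mathbb{D}$, and transition function $\delta:Q^2\times\{<,=,>\}\to Q^2$. Let $\to$ be its transition relation and $\le$ the subconfiguration relation described below. Then $\le$ is a well-quasi-order on configurations and $\to$ is compatible with $\le$; that is, (configurations, $\le$, $\to$) is a well-structured transition system.
   Context: In $\mathrm{POP}^{\precsim}$, a configuration with $n$ agents is a sequence $((q_1,d_1),\dots,(q_n,d_n))\in(Q\times\mathbb{D})^n$ with $d_1\le d_2\le\dots\le d_n$ (agents sorted by color; $q_i$ is the mutable state, $d_i$ the immutable hidden color). A transition chooses an ordered pair $(i,j)$ of distinct agents (initiator $i$, responder $j$) and replaces $(q_i,q_j)$ by $\delta(q_i,q_j,r)$, where $r\in\{<,=,>\}$ is the result of comparing $d_i$ with $d_j$; all other components are unchanged. The subconfiguration relation: for configurations $s=((q_i,d_i))_{i\le m}$ and $t=((q'_i,d'_i))_{i\le m'}$, $s\le t$ iff there is a strictly increasing $f:\{1,\dots,m\}\to\{1,\dots,m'\}$ with $q_i=q'_{f(i)}$ for all $i$ and, for all $i,j$, $d_i\le d_j$ iff $d'_{f(i)}\le d'_{f(j)}$. A well-quasi-order is a reflexive transitive relation such that every infinite sequence $x_0,x_1,\dots$ has $i<j$ with $x_i\le x_j$. Compatibility means: whenever $s\to s'$ and $s\le t$, there exists $t'$ with $t\to t'$ and $s'\le t'$. *)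

(* Defs.v *)
From mathcomp Require Import all_boot all_order.
Set Implicit Arguments. Unset Strict Implicit. Unset Printing Implicit Defensive.
Import Order.TTheory.
Local Open Scope order_scope.

Definition cmpD {disp : Order.disp_t} {D : orderType disp} (x y : D) : comparison :=
  if x < y then Lt else if x == y then Eq else Gt.

Definition is_config {disp : Order.disp_t} (Q : finType) (D : orderType disp)
  (s : seq (Q * D)) : Prop :=
  sorted (fun a b : Q * D => a.2 <= b.2) s.

Definition step {disp : Order.disp_t} (Q : finType) (D : orderType disp)
  (delta : Q -> Q -> comparison -> Q * Q) (s s' : seq (Q * D)) : Prop :=
  exists i j : 'I_(size s), i != j /\
    let ai := tnth (in_tuple s) i in
    let aj := tnth (in_tuple s) j in
    let qq := delta ai.1 aj.1 (cmpD ai.2 aj.2) in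
    s' = [seq (if k == i then (qq.1, ai.2)
               else if k == j then (qq.2, aj.2)
               else tnth (in_tuple s) k) | k <- enum 'I_(size s)].

Definition subconfig {disp : Order.disp_t} (Q : finType) (D : orderType disp)
  (s t : seq (Q * D)) : Prop :=
  exists f : 'I_(size s) -> 'I_(size t),
    (forall a b : 'I_(size s), (a < b)%N -> (f a < f b)%N) /\
    (forall a : 'I_(size s), (tnth (in_tuple s) a).1 = (tnth (in_tuple t) (f a)).1) /\
    (forall a b : 'I_(size s),
        ((tnth (in_tuple s) a).2 <= (tnth (in_tuple s) b).2) =
        ((tnth (in_tuple t) (f a)).2 <= (tnth (in_tuple t) (f b)).2)).

Definition wqo_on {T : Type} (P : T -> Prop) (R : T -> T -> Prop) : Prop :=
  (forall x, P x -> R x x) /\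
  (forall x y z, P x -> P y -> P z -> R x y -> R y z -> R x z) /\
  (forall u : nat -> T, (forall n, P (u n)) ->
     exists i j, (i < j)%N /\ R (u i) (u j)).

Definition compatible_on {T : Type} (P : T -> Prop) (R step : T -> T -> Prop) : Prop :=
  forall s s' t, P s -> P t -> step s s' -> R s t ->
    exists t', step t t' /\ R s' t'.

(* Main.v *)
Require Import Defs.
From Stdlib Require Import Classical ClassicalEpsilon.
From mathcomp Require Import all_boot all_order zify.
Set Implicit Arguments. Unset Strict Implicit. Unset Printing Implicit Defensive.
Import Order.TTheory.

Inductive emb {A : Type} (R : A -> A -> Prop) : seq A -> seq A -> Prop :=
 | emb_nil t : emb R [::] t
 | emb_skip y s t : emb R s t -> emb R s (y :: t)
 | emb_cons x y s t : R x y -> emb R s t -> emb R (x :: s) (y :: t).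

Lemma emb_trans A (R : A -> A -> Prop) (Rtr : forall x y z, R x y -> R y z -> R x z)
  s t u : emb R s t -> emb R t u -> emb R s u.
Proof.
move=> H1 H2; elim: H2 s H1 => [t' | y t' u' H IH | x y t' u' Rxy H IH] s H1.
- inversion H1; constructor.
- apply: emb_skip; exact: IH.
- inversion H1; subst.
  + constructor.
  + apply: emb_skip; exact: IH.
  + apply: emb_cons; [exact: Rtr Rxy | exact: IH].
Qed.

Lemma emb_idx A (R : A -> A -> Prop) s t : emb R s t ->
  exists h : nat -> nat, (forall a b, a < b -> b < size s -> h a < h b) /\
    (forall a, a < size s -> h a < size t) /\
    (forall x0 y0 a, a < size s -> R (nth x0 s a) (nth y0 t (h a))).
Proof.
elim => [t' | y s' t' _ [h [h1 [h2 h3]]] | x y s' t' Rxy _ [h [h1 [h2 h3]]]].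
- by exists id; split.
- exists (fun a => (h a).+1); split; [|split].
  + move=> a b ab bs; rewrite ltnS; exact: h1.
  + move=> a; rewrite /= ltnS; exact: h2.
  + move=> x0 y0 a ha; exact: h3.
- exists (fun a => if a is a'.+1 then (h a').+1 else 0); split; [|split].
  + move=> [|a] [|b] //= ab bs; rewrite ltnS; exact: h1.
  + move=> [|a] //= ha; rewrite ltnS; exact: h2.
  + move=> x0 y0 [|a] //= ha; exact: h3.
Qed.

Lemma pigeon (Q : finType) (u : nat -> Q) : exists i j, i < j /\ u i = u j.
Proof.
pose s := [seq u k | k <- iota 0 #|Q|.+1].
have: ~~ uniq s.
  apply/negP => /card_uniqP Hu; have := max_card (mem s).
  by rewrite Hu size_map size_iota ltnn.
case/(uniqPn (u 0)) => i [j [ij js e]]; exists i, j; split => //.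
rewrite size_map size_iota in js.
rewrite !(nth_map 0) ?size_iota ?(ltn_trans ij) // !nth_iota ?(ltn_trans ij) // in e.
Qed.

Definition bad {X} (E : X -> X -> Prop) (u : nat -> X) :=
  forall i j, i < j -> ~ E (u i) (u j).
Definition agree {X} (v : nat -> X) n (w : nat -> X) := forall k, k < n -> w k = v k.
Definition Pmin {X} E (mu : X -> nat) v n w :=
  bad E w /\ agree v n w /\ (forall w', bad E w' -> agree v n w' -> mu (w n) <= mu (w' n)).

Lemma exmin X E (mu : X -> nat) v n :
  (exists w, bad E w /\ agree v n w) -> exists w, Pmin E mu v n w.
Proof.
move=> [w0 [b0 a0]].
suff H: forall k w, bad E w -> agree v n w -> mu (w n) <= k -> exists w, Pmin E mu v n w.
  exact: (H _ w0).
elim=> [|k IH] w bw aw hk.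
- exists w; split; [done | split; [done | move=> w' _ _]].
  by rewrite leqn0 in hk; rewrite (eqP hk).
- case: (classic (exists w', bad E w' /\ agree v n w' /\ mu (w' n) <= k))
    => [[w' [? [? ?]]] | Hn]; first exact: (IH w').
  exists w; split => //; split => // w' bw' aw'.
  rewrite leqNgt; apply/negP => lt; apply: Hn; exists w'; split => //; split => //.
  by rewrite -ltnS; exact: leq_trans lt hk.
Qed.

Fixpoint mbs {X} E (mu : X -> nat) (u0 : nat -> X) n : nat -> X :=
  match n with 0 => u0 | n'.+1 => epsilon (inhabits u0) (Pmin E mu (mbs E mu u0 n') n') end.

Lemma minimal_bad X E (mu : X -> nat) (u0 : nat -> X) : bad E u0 ->
  exists m, bad E m /\ forall n w, bad E w -> agree m n w -> mu (m n) <= mu (w n).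
Proof.
move=> b0; pose B := mbs E mu u0.
have step: forall n, bad E (B n) -> Pmin E mu (B n) n (B n.+1).
  move=> n bn; apply: epsilon_spec; apply: exmin; exists (B n); by split.
have bB: forall n, bad E (B n) by elim=> // n IH; exact: (step n IH).1.
have ag: forall n k, k <= n -> agree (B k) k (B n).
  move=> n k; elim: n => [|n IH] kn.
  - by rewrite leqn0 in kn; rewrite (eqP kn).
  - move: kn; rewrite leq_eqVlt => /orP [/eqP -> // | kn] j jk.
    rewrite ((step n (bB n)).2.1 j (leq_trans jk kn)); exact: IH.
exists (fun n => B n.+1 n); split.
- move=> i j ij; rewrite -(ag j.+1 i.+1 (ltnW ij) i (ltnSn i)); exact: bB.
- move=> n w bw aw; have := (step n (bB n)).2.2 w bw; apply => k kn.
  by rewrite aw // (ag n k.+1 kn k (ltnSn k)).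
Qed.

Lemma incr (h : nat -> nat) : (forall k, h k < h k.+1) -> forall i j, i < j -> h i < h j.
Proof.
move=> hS i j; elim: j => // j IH; rewrite ltnS leq_eqVlt => /orP [/eqP -> // | ij].
exact: ltn_trans (IH ij) (hS j).
Qed.

Theorem higman A (R : A -> A -> Prop) (Rtr : forall x y z, R x y -> R y z -> R x z)
  (Rwqo : forall u : nat -> A, exists i j, i < j /\ R (u i) (u j))
  (u : nat -> seq A) : exists i j, i < j /\ emb R (u i) (u j).
Proof.
apply: NNPP => Hn.
have bu : bad (emb R) u by move=> i j ij He; apply: Hn; exists i, j.
have [m [bm minm]] := @minimal_bad _ (emb R) size u bu.
have ne: forall n, m n <> [::].
  by move=> n e; apply: (bm n n.+1 (ltnSn n)); rewrite e; constructor.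
have [x0 _] : exists x0 : A, True.
  by case E: (m 0) => [|x s]; [have := ne 0 | exists x].
pose a n := head x0 (m n). pose v n := behead (m n).
have mav: forall n, m n = a n :: v n.
  by move=> n; rewrite /a /v; case E: (m n) => //; have := ne n.
have [N HN]: exists N, forall i, N <= i -> exists j, i < j /\ R (a i) (a j).
  apply: NNPP => H.
  have H': forall N, exists i, N <= i /\ forall j, i < j -> ~ R (a i) (a j).
    move=> N; apply: NNPP => H2; apply: H; exists N => i Ni.
    apply: NNPP => H3; apply: H2; exists i; split => // j ij Rij.
    by apply: H3; exists j.
  pose tf N := epsilon (inhabits 0) (fun i => N <= i /\ forall j, i < j -> ~ R (a i) (a j)).
  have tfP: forall N, N <= tf N /\ forall j, tf N < j -> ~ R (a (tf N)) (a j).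
    by move=> N; exact: (epsilon_spec _ _ (H' N)).
  pose h k := iter k (fun x => tf x.+1) (tf 0).
  have hS: forall k, h k < h k.+1 by move=> k; exact: (tfP (h k).+1).1.
  have hmono := incr hS.
  have [i [j [ij Rij]]] := Rwqo (fun k => a (h k)).
  have hterm : forall k j, h k < j -> ~ R (a (h k)) (a j).
    by case=> [|k]; [exact: (tfP 0).2 | exact: (tfP (h k).+1).2].
  exact: hterm i (h j) (hmono i j ij) Rij.
pose nx i := epsilon (inhabits 0) (fun j => i < j /\ R (a i) (a j)).
have nxP: forall i, N <= i -> i < nx i /\ R (a i) (a (nx i)).
  by move=> i Ni; exact: (epsilon_spec _ _ (HN i Ni)).
pose g k := iter k nx N.
have gN: forall k, N <= g k.
  elim=> // k IH; exact: leq_trans IH (ltnW (nxP (g k) IH).1).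
have gS: forall k, g k < g k.+1 := fun k => (nxP _ (gN k)).1.
have gR: forall k l, k < l -> R (a (g k)) (a (g l)).
  move=> k l; elim: l => // l IH.
  rewrite ltnS leq_eqVlt => /orP [/eqP -> | kl]; first exact: (nxP _ (gN l)).2.
  exact: Rtr (IH kl) (nxP _ (gN l)).2.
have gmono := incr gS.
have gle: forall k, g 0 <= g k by case=> // k; exact: ltnW (gmono 0 k.+1 (ltn0Sn k)).
pose w k := if k < g 0 then m k else v (g (k - g 0)).
have bw : bad (emb R) w.
  move=> i j ij; rewrite /w.
  case: ifP => hi; case: ifP => hj.
  - exact: bm.
  - move=> He; apply: (bm i (g (j - g 0))); first exact: leq_trans hi (gle _).
    rewrite [m (g _)]mav; exact: emb_skip.
  - by rewrite (ltn_trans ij hj) in hi.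
  - move=> He; have kl: i - g 0 < j - g 0 by move: hi hj; lia.
    apply: (bm (g (i - g 0)) (g (j - g 0))); first exact: gmono.
    rewrite !mav; apply: emb_cons => //; exact: gR.
have aw: agree m (g 0) w by move=> k kg; rewrite /w kg.
have := minm (g 0) w bw aw; rewrite /w ltnn subnn {1}mav /=.
by rewrite ltnn.
Qed.
Section Conf.
Variables (disp : Order.disp_t) (Q : finType) (D : orderType disp).

Definition mkb (c : D) (B : seq Q) : seq (Q * D) := [seq (q, c) | q <- B].

Inductive Dec : seq (Q * D) -> seq (seq Q) -> Prop :=
 | dec_nil : Dec [::] [::]
 | dec_cons c B s bs : all (fun z : Q * D => (c < z.2)%O) s -> Dec s bs ->
     Dec (mkb c B ++ s) (B :: bs).

Lemma dec_inv t B bs : Dec t (B :: bs) ->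
  exists c t', [/\ t = mkb c B ++ t', all (fun z : Q * D => (c < z.2)%O) t' & Dec t' bs].
Proof. by move=> H; inversion H; subst; eexists; eexists. Qed.

Lemma dec_nil_inv t : Dec t [::] -> t = [::].
Proof. by move=> H; inversion H. Qed.

Fixpoint spanc (c : D) (s : seq (Q * D)) : seq Q * seq (Q * D) :=
  if s is z :: s' then
    (if z.2 == c then (z.1 :: (spanc c s').1, (spanc c s').2) else ([::], s))
  else ([::], [::]).

Lemma spanc_cat c s : s = mkb c (spanc c s).1 ++ (spanc c s).2.
Proof.
elim: s => //= [[q d] s IH] /=; case: eqP => [-> | _] //=.
by rewrite -IH.
Qed.

Lemma spanc_head c s z s' : (spanc c s).2 = z :: s' -> z.2 != c.
Proof.
elim: s z s' => //= z0 s IH z s'; case: ifP => [_ /IH //| hz [<- _]].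
by rewrite hz.
Qed.

Lemma spanc_size c s : size (spanc c s).2 <= size s.
Proof. elim: s => //= z s IH; case: ifP => //= _; exact: leqW. Qed.

Lemma dec_ex s : sorted (fun a b : Q * D => (a.2 <= b.2)%O) s -> exists bs, Dec s bs.
Proof.
have tr : transitive (fun a b : Q * D => (a.2 <= b.2)%O).
  by move=> y x z; exact: le_trans.
move: {2}(size s) (leqnn (size s)) => n; elim: n s => [|n IH] s.
  by rewrite leqn0 => /nilP ->; exists [::]; constructor.
case: s => [|z s0] hs srt; first by exists [::]; constructor.
set c := z.2.
pose p := spanc c (z :: s0).
have E : z :: s0 = mkb c p.1 ++ p.2 := spanc_cat c (z :: s0).
have E2 : size p.2 <= size s0 by rewrite /p /= eqxx; exact: spanc_size.
have srt2 : sorted (fun a b : Q * D => (a.2 <= b.2)%O) p.2.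
  apply: (subseq_sorted tr (suffix_subseq (mkb c p.1) _)); by rewrite -E.
have allz : all (fun b : Q * D => (c <= b.2)%O) (z :: s0).
  by rewrite /= le_refl /=; exact: (order_path_min tr srt).
have hall : all (fun y : Q * D => (c < y.2)%O) p.2.
  case Ep: p.2 srt2 => [|y r] //= srt2.
  have hy : y \in z :: s0 by rewrite E mem_cat Ep mem_head orbT.
  have cy : (c <= y.2)%O := allP allz y hy.
  have ny : y.2 != c := spanc_head Ep.
  have cy' : (c < y.2)%O by rewrite lt_neqAle eq_sym ny cy.
  rewrite cy' /=; apply/allP => x xr.
  exact: lt_le_trans cy' (allP (order_path_min tr srt2) x xr).
have [bs Hbs] := IH p.2 (leq_trans E2 hs) srt2.
exists (p.1 :: bs); rewrite E; constructor => //.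
Qed.

Lemma dec_sub bs ct : emb (emb (@eq Q)) bs ct -> forall s t, Dec s bs -> Dec t ct ->
  exists g : nat -> nat, (forall a b, a < b -> b < size s -> g a < g b) /\
    (forall a, a < size s -> g a < size t) /\
    (forall x0 a, a < size s -> (nth x0 s a).1 = (nth x0 t (g a)).1) /\
    (forall x0 a b, a < size s -> b < size s ->
       ((nth x0 s a).2 <= (nth x0 s b).2)%O = ((nth x0 t (g a)).2 <= (nth x0 t (g b)).2)%O).
Proof.
elim => [ct' | C bs' ct' _ IH | B C bs' ct' HBC _ IH] s t Ds Dt.
- by rewrite (dec_nil_inv Ds); exists id; split.
- have [d [t' [-> _ Dt']]] := dec_inv Dt.
  have [g [g1 [g2 [g3 g4]]]] := IH s t' Ds Dt'.
  exists (fun a => g a + size C); split; [|split; [|split]].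
  + by move=> a b ab hb; rewrite ltn_add2r; exact: g1.
  + by move=> a ha; rewrite size_cat size_map addnC ltn_add2l; exact: g2.
  + move=> x0 a ha; rewrite nth_cat size_map ltnNge leq_addl /= addnK; exact: g3.
  + move=> x0 a b ha hb; rewrite !nth_cat size_map !ltnNge !leq_addl /= !addnK; exact: g4.
- have [c [s' [-> hs Ds']]] := dec_inv Ds.
  have [d [t' [-> ht Dt']]] := dec_inv Dt.
  have [g [g1 [g2 [g3 g4]]]] := IH s' t' Ds' Dt'.
  have [h [h1 [h2 h3]]] := emb_idx HBC.
  exists (fun a => if a < size B then h a else g (a - size B) + size C).
  split; [|split; [|split]].
  + move=> a b ab; rewrite size_cat size_map => hb.
    case: (ltnP a (size B)) => ha; case: (ltnP b (size B)) => hb'.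
    * exact: h1.
    * exact: leq_trans (h2 a ha) (leq_addl _ _).
    * by move: ab ha hb'; lia.
    * rewrite ltn_add2r; apply: g1; move: ab ha hb hb'; lia.
  + move=> a; rewrite !size_cat !size_map => ha.
    case: (ltnP a (size B)) => hB.
    * exact: leq_trans (h2 a hB) (leq_addr _ _).
    * rewrite addnC ltn_add2l; apply: g2; move: ha hB; lia.
  + move=> x0 a; rewrite size_cat size_map => ha.
    case: (ltnP a (size B)) => hB.
    * have hC := h2 a hB.
      rewrite !nth_cat !size_map hB hC !(nth_map x0.1) //=.
      exact: h3.
    * rewrite !nth_cat !size_map ltnNge hB /= ltnNge leq_addl /= addnK.
      apply: g3; move: ha hB; lia.
  + move=> x0 a b; rewrite size_cat size_map => ha hb.
    have hs' : forall k, k < size s' -> (c < (nth x0 s' k).2)%O.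
      by move=> k hk; exact: (allP hs) _ (mem_nth x0 hk).
    have ht' : forall k, k < size t' -> (d < (nth x0 t' k).2)%O.
      by move=> k hk; exact: (allP ht) _ (mem_nth x0 hk).
    case: (ltnP a (size B)) => hA; case: (ltnP b (size B)) => hB.
    * rewrite !nth_cat !size_map hA hB (h2 a hA) (h2 b hB) !(nth_map x0.1) ?h2 //=.
      by rewrite !le_refl.
    * rewrite !nth_cat !size_map hA ltnNge hB (h2 a hA) ltnNge leq_addl /= addnK.
      rewrite !(nth_map x0.1) ?h2 //= ltW ?ltW //.
      -- apply: ht'; apply: g2; move: hb hB; lia.
      -- apply: hs'; move: hb hB; lia.
    * rewrite !nth_cat !size_map hB ltnNge hA (h2 b hB) ltnNge leq_addl /= addnK.
      rewrite !(nth_map x0.1) ?h2 //= !lt_geF //.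
      -- apply: ht'; apply: g2; move: ha hA; lia.
      -- apply: hs'; move: ha hA; lia.
    * rewrite !nth_cat !size_map ltnNge hA ltnNge hB /= !ltnNge !leq_addl /= !addnK.
      apply: g4; move: ha hb hA hB; lia.
Qed.

Lemma subconfig_of (s t : seq (Q * D)) (g : nat -> nat) :
  (forall a b, a < b -> b < size s -> g a < g b) ->
  (forall a, a < size s -> g a < size t) ->
  (forall x0 a, a < size s -> (nth x0 s a).1 = (nth x0 t (g a)).1) ->
  (forall x0 a b, a < size s -> b < size s ->
       ((nth x0 s a).2 <= (nth x0 s b).2)%O = ((nth x0 t (g a)).2 <= (nth x0 t (g b)).2)%O) ->
  subconfig s t.
Proof.
move=> g1 g2 g3 g4.
exists (fun a : 'I_(size s) => Ordinal (g2 a (ltn_ord a))); split; [|split].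
- move=> a b ab /=; exact: g1 ab (ltn_ord b).
- move=> a; have x0 : Q * D := tnth (in_tuple s) a.
  rewrite !(tnth_nth x0) /=; exact: g3.
- move=> a b; have x0 : Q * D := tnth (in_tuple s) a.
  rewrite !(tnth_nth x0) /=; exact: g4.
Qed.

End Conf.

Definition upd {n : nat} {X Y : Type} (T : 'I_n -> X * Y) (qq : X * X) (i j k : 'I_n) : X * Y :=
  if k == i then (qq.1, (T i).2) else if k == j then (qq.2, (T j).2) else T k.

Lemma nth_map_enum n X (F : 'I_n -> X) x0 a (H : a < n) :
  nth x0 [seq F k | k <- enum 'I_n] a = F (Ordinal H).
Proof.
rewrite (nth_map (Ordinal H)) ?size_enum_ord //; congr F; apply: val_inj.
by rewrite /= nth_enum_ord.
Qed.

Lemma cmpD_eq disp (D : orderType disp) (x y x' y' : D) :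
  (x <= y)%O = (x' <= y')%O -> (y <= x)%O = (y' <= x')%O -> cmpD x y = cmpD x' y'.
Proof. by move=> h1 h2; rewrite /cmpD !ltNge !eq_le h1 h2. Qed.

Theorem lemma8 (disp : Order.disp_t) (Q : finType) (D : orderType disp)
  (delta : Q -> Q -> comparison -> Q * Q) :
  wqo_on (@is_config disp Q D) (@subconfig disp Q D) /\
  compatible_on (@is_config disp Q D) (@subconfig disp Q D) (@step disp Q D delta).
Proof.
split.
- split; [|split].
  + by move=> s _; exists id; split.
  + move=> x y z _ _ _ [f1 [m1 [s1 c1]]] [f2 [m2 [s2 c2]]].
    exists (fun a => f2 (f1 a)); split; [|split].
    * by move=> a b ab; apply: m2; apply: m1.
    * by move=> a; rewrite s1 s2.
    * by move=> a b; rewrite c1 c2.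
  + move=> u Pu.
    pose bsf n := epsilon (inhabits [::]) (fun bs => Dec (u n) bs).
    have Hb : forall n, Dec (u n) (bsf n) := fun n => epsilon_spec _ _ (dec_ex (Pu n)).
    have w1 : forall v : nat -> seq Q, exists i j, i < j /\ emb (@eq Q) (v i) (v j).
      apply: higman; [by move=> x y z -> | exact: pigeon].
    have w2 := higman (@emb_trans _ (@eq Q) (fun x y z e1 e2 => etrans e1 e2)) w1.
    have [i [j [ij E]]] := w2 bsf.
    exists i, j; split => //.
    have [g [g1 [g2 [g3 g4]]]] := dec_sub E (Hb i) (Hb j).
    exact: subconfig_of g1 g2 g3 g4.
- move=> s s' t _ _ [i [j [ij Hs']]] [f [fm [fs fc]]].
  set Ts := tnth (in_tuple s) in Hs' fs fc.
  set Tt := tnth (in_tuple t) in fs fc.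
  pose qs := delta (Ts i).1 (Ts j).1 (cmpD (Ts i).2 (Ts j).2).
  pose qt := delta (Tt (f i)).1 (Tt (f j)).1 (cmpD (Tt (f i)).2 (Tt (f j)).2).
  have Es : s' = [seq upd Ts qs i j k | k <- enum 'I_(size s)] := Hs'.
  have finj : forall a b, (f a == f b) = (a == b).
    move=> a b; apply/eqP/eqP => [e|-> //]; apply/val_inj.
    by case: (ltngtP a b) => [h|h|//]; have := fm _ _ h; rewrite e ltnn.
  have eq_q : qs = qt.
    by rewrite /qs /qt !fs (cmpD_eq (fc i j) (fc j i)).
  exists [seq upd Tt qt (f i) (f j) k | k <- enum 'I_(size t)]; split.
    by exists (f i), (f j); split; [rewrite finj | ].
  rewrite Es.
  have x0 : Q * D := Ts i.
  have insE : forall a (H : a < size s), insubd i a = Ordinal H.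
    by move=> a H; apply: val_inj; rewrite /= val_insubd H.
  have ordE : forall n (k : 'I_n), Ordinal (ltn_ord k) = k by move=> n k; apply: val_inj.
  have upd2 : forall n (T : 'I_n -> Q * D) qq a b k, (upd T qq a b k).2 = (T k).2.
    by move=> n T qq a b k; rewrite /upd; case: ifP => [/eqP -> | _] //; case: ifP => [/eqP -> |].
  apply: (@subconfig_of _ _ _ _ _ (fun a => val (f (insubd i a)))).
  + move=> a b ab; rewrite size_map size_enum_ord => hb.
    rewrite (insE a (ltn_trans ab hb)) (insE b hb); exact: fm.
  + by move=> a _; rewrite size_map size_enum_ord; exact: ltn_ord.
  + move=> y0 a; rewrite size_map size_enum_ord => ha.
    rewrite (insE a ha) (nth_map_enum _ _ ha) (nth_map_enum _ _ (ltn_ord (f _))) ordE.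
    rewrite /upd !finj -eq_q.
    case: ifP => _ //; case: ifP => _ //.
  + move=> y0 a b; rewrite size_map size_enum_ord => ha hb.
    rewrite (insE a ha) (insE b hb) (nth_map_enum _ _ ha) (nth_map_enum _ _ hb).
    rewrite (nth_map_enum _ _ (ltn_ord (f (Ordinal ha)))) (nth_map_enum _ _ (ltn_ord (f (Ordinal hb)))) !ordE.
    rewrite !upd2; exact: fc.
Qed.
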